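(* Let $A$ be a unital power-associative algebra over a field of characteristic zero, let $R$ be a Rota–Baxter operator of weight zero on $A$, and suppose $(R(1))^m=0$ for some $m\in\mathbb N$. Then (a) $R^{2m}=0$ if $A$ is associative or alternative; (b) $R^{3m-1}=0$ if $A$ is a Jordan algebra.
   Context: A linear operator $R$ on $A$ is a Rota–Baxter operator of weight $0$ if $R(x)R(y)=R(R(x)y+xR(y))$ for all $x,y\in A$. Power-associative: every element generates an associative subalgebra. *)

(* Defs.v *)
(* A (possibly non-associative) unital algebra over a field F
   is represented by an F-vector space V (lmodType F) with a bilinear
   multiplication [mul] and a two-sided unit [one]. *)
From HB Require Import structures.
From mathcomp Require Import all_boot all_order all_algebra.
Set Implicit Arguments. Unset Strict Implicit. Unset Printing Implicit Defensive.
Import GRing.Theory.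
Local Open Scope ring_scope.

Section Alg.
Variables (F : fieldType) (V : lmodType F) (mul : V -> V -> V) (one : V).

Definition bilinear_mul : Prop :=
  (forall (a : F) (x y z : V), mul (a *: x + y) z = a *: mul x z + mul y z) /\
  (forall (a : F) (x y z : V), mul z (a *: x + y) = a *: mul z x + mul z y).

Definition unital : Prop := forall x : V, mul one x = x /\ mul x one = x.

Inductive gen (x : V) : V -> Prop :=
  | gen_base : gen x x
  | gen_zero : gen x 0
  | gen_lin : forall (a : F) (u v : V), gen x u -> gen x v -> gen x (a *: u + v)
  | gen_mul : forall u v : V, gen x u -> gen x v -> gen x (mul u v).

Definition power_associative : Prop :=
  forall x a b c : V, gen x a -> gen x b -> gen x c ->
    mul (mul a b) c = mul a (mul b c).

Definition associative_alg : Prop :=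
  forall x y z : V, mul (mul x y) z = mul x (mul y z).

Definition alternative_alg : Prop :=
  (forall x y : V, mul (mul x x) y = mul x (mul x y)) /\
  (forall x y : V, mul (mul y x) x = mul y (mul x x)).

Definition jordan_alg : Prop :=
  (forall x y : V, mul x y = mul y x) /\
  (forall x y : V, mul (mul (mul x x) y) x = mul (mul x x) (mul y x)).

Definition rota_baxter0 (R : V -> V) : Prop :=
  (forall (a : F) (x y : V), R (a *: x + y) = a *: R x + R y) /\
  (forall x y : V, mul (R x) (R y) = R (mul (R x) y + mul x (R y))).

(* Powers: x^0 = 1, x^(n+1) = x * x^n (well defined under power-associativity). *)
Fixpoint npow (x : V) (n : nat) : V :=
  match n with 0 => one | n'.+1 => mul x (npow x n') end.

End Alg.

(* Main.v *)
Require Import Defs.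
From HB Require Import structures.
From mathcomp Require Import all_boot all_order all_algebra.
Import GRing.Theory.
Local Open Scope ring_scope.

Section Aux.
Variables (F : fieldType) (V : lmodType F) (mul : V -> V -> V) (one : V) (R : V -> V).
Hypothesis Hbil : bilinear_mul mul.
Hypothesis Hun : unital mul one.
Hypothesis Hrb : rota_baxter0 mul R.

Lemma R0 : R 0 = 0.
Proof.
case: Hrb => HR _; have := HR 1 0 0; rewrite !scale1r addr0 => E.
by apply: (@addrI _ (R 0)); rewrite addr0 -E.
Qed.

Lemma RD x y : R (x + y) = R x + R y.
Proof. by case: Hrb => HR _; have := HR 1 x y; rewrite !scale1r. Qed.

Lemma RZ a x : R (a *: x) = a *: R x.
Proof. by case: Hrb => HR _; have := HR a x 0; rewrite !addr0 R0 addr0. Qed.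

Lemma mul0l y : mul 0 y = 0.
Proof.
case: Hbil => H _; have := H 1 0 0 y; rewrite !scale1r addr0 => E.
by apply: (@addrI _ (mul 0 y)); rewrite addr0 -E.
Qed.

Lemma mulDr z x y : mul z (x + y) = mul z x + mul z y.
Proof. by case: Hbil => _ H; have := H 1 x y z; rewrite !scale1r. Qed.

Lemma mul0r y : mul y 0 = 0.
Proof.
have := mulDr y 0 0; rewrite addr0 => E.
by apply: (@addrI _ (mul y 0)); rewrite addr0 -E.
Qed.

Lemma mulZr a z x : mul z (a *: x) = a *: mul z x.
Proof. by case: Hbil => _ H; have := H a x 0 z; rewrite !addr0 mul0r addr0. Qed.

Lemma iterR0 j : iter j R 0 = 0.
Proof. by elim: j => //= j ->; rewrite R0. Qed.

Lemma iterRD j x y : iter j R (x + y) = iter j R x + iter j R y.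
Proof. by elim: j => //= j ->; rewrite RD. Qed.

Lemma iterRZ j a x : iter j R (a *: x) = a *: iter j R x.
Proof. by elim: j => //= j ->; rewrite RZ. Qed.

Lemma mul_a_pow n :
  mul (R one) (iter n R one) = (n.+1)%:R *: iter n.+1 R one.
Proof.
elim: n => [|n IH].
  by rewrite /= scale1r; case: (Hun (R one)).
case: Hrb => _ HRB.
rewrite [iter n.+1 R one]iterS HRB -iterS IH.
case: (Hun (iter n.+1 R one)) => -> _.
rewrite -[X in _ + X]scale1r -scalerDl RZ -iterS.
by rewrite -[n.+2]addn1 natrD.
Qed.

Lemma npow_fact n : npow mul one (R one) n = (n`!)%:R *: iter n R one.
Proof.
elim: n => [|n IH]; first by rewrite /= scale1r.
rewrite /= IH mulZr mul_a_pow scalerA -natrM.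
by rewrite factS mulnC.
Qed.

Lemma key m : npow mul one (R one) m = 0 -> [pchar F] =i pred0 ->
  forall i, (i <= m)%N -> forall y,
  iter i R (mul (iter (m - i) R one) (iter i R y)) = 0.
Proof.
move=> Hm Hc.
have bm : iter m R one = 0.
  move: Hm; rewrite npow_fact => /eqP; rewrite scaler_eq0 => /orP [|/eqP //].
  by move/pcharf0P: Hc => ->; rewrite eqn0Ngt fact_gt0.
elim=> [|i IH] Hi y.
  by rewrite subn0 bm mul0l.
have IH' := IH (ltnW Hi).
have Hs : (m - i = (m - i.+1).+1)%N by rewrite subnSK.
rewrite Hs in IH'.
set k := (m - i.+1)%N in IH' *.
case: Hrb => _ HRB.
have E : R (mul (iter k R one) (R (iter i R y))) =
         mul (iter k.+1 R one) (R (iter i R y)) -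
         R (mul (iter k.+1 R one) (iter i R y)).
  by rewrite iterS HRB RD -iterS addrAC subrr add0r.
rewrite iterSr [iter i.+1 R y]iterS E.
rewrite iterRD -[R (iter i R y)]/(iter i.+1 R y) [iter i.+1 R y]iterSr IH' add0r.
rewrite -scaleN1r iterRZ -iterSr iterS IH' R0.
by rewrite scaler0.
Qed.

End Aux.

Theorem lemma11 (F : fieldType) (V : lmodType F) (mul : V -> V -> V) (one : V)
  (R : V -> V) (m : nat) :
  [pchar F] =i pred0 ->
  bilinear_mul mul -> unital mul one -> power_associative mul ->
  rota_baxter0 mul R ->
  npow mul one (R one) m = 0 ->
  ((associative_alg mul \/ alternative_alg mul) ->
     forall x : V, iter (2 * m)%N R x = 0) /\
  (jordan_alg mul -> forall x : V, iter (3 * m - 1)%N R x = 0).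
Proof.
move=> Hc Hbil Hun _ Hrb Hm.
have H2 : forall x, iter (2 * m)%N R x = 0.
  move=> x; have := @key F V mul one R Hbil Hun Hrb m Hm Hc m (leqnn m) x.
  rewrite subnn /=; case: (Hun (iter m R x)) => -> _.
  by rewrite -iterD addnn -mul2n.
split=> // _ x.
have -> : (3 * m - 1 = (3 * m - 1 - 2 * m) + 2 * m)%N.
  rewrite subnK //; case: (m) => [|n] //.
  by rewrite !mulnS /= subn1 /= !ltnS leq_mul2r orbT.
by rewrite iterD H2 (@iterR0 F V mul R Hrb).
Qed.
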